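(* Let $\Gamma$ be a discrete subgroup of $E(n)$, and let $A=\lambda A'$, where $A'\in O(n)$ and $\lambda>0$. Suppose that $A\Gamma A^{-1}\subset\Gamma$ and $\lambda\le1$. Then $A\Gamma A^{-1}=\Gamma$.
   Context: $E(n)$ denotes the group of isometries of $\mathbb{R}^n$ (maps $x\mapsto Bx+b$, $B\in O(n)$, $b\in\mathbb{R}^n$) with the topology of $O(n)\times\mathbb{R}^n$; discreteness refers to this topology. $A\Gamma A^{-1}=\{A\circ\gamma\circ A^{-1}:\gamma\in\Gamma\}$. *)

(* Defs.v *)
From Stdlib Require Import Reals Lra Lia Arith.
Open Scope R_scope.

(* Vectors of R^n are represented as nat -> R (only coordinates < n matter);
   n x n matrices as nat -> nat -> R. *)

Fixpoint rsum (n : nat) (f : nat -> R) : R :=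
  match n with
  | O => 0
  | S m => rsum m f + f m
  end.

Definition matmul (n : nat) (A C : nat -> nat -> R) : nat -> nat -> R :=
  fun i j => rsum n (fun k => A i k * C k j).

Definition mvmul (n : nat) (A : nat -> nat -> R) (v : nat -> R) : nat -> R :=
  fun i => rsum n (fun k => A i k * v k).

Definition transpose (A : nat -> nat -> R) : nat -> nat -> R := fun i j => A j i.

Definition isO (n : nat) (B : nat -> nat -> R) : Prop :=
  (forall i j, (i < n)%nat -> (j < n)%nat ->
      rsum n (fun k => B k i * B k j) = if Nat.eqb i j then 1 else 0) /\
  (forall i j, (n <= i)%nat \/ (n <= j)%nat -> B i j = 0).

(* An element of E(n): the pair (B, b) representing x |-> B x + b,
   with B in O(n) and b in R^n (zero-padded, so the representation is unique). *)
Definition Elt : Type := ((nat -> nat -> R) * (nat -> R))%type.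

Definition isE (n : nat) (g : Elt) : Prop :=
  isO n (fst g) /\ (forall i, (n <= i)%nat -> snd g i = 0).

Definition apply (n : nat) (g : Elt) (x : nat -> R) : nat -> R :=
  fun i => mvmul n (fst g) x i + snd g i.

Definition idE (n : nat) : Elt :=
  (fun i j => if andb (Nat.ltb i n) (Nat.eqb i j) then 1 else 0, fun _ => 0).

Definition compE (n : nat) (g h : Elt) : Elt :=
  (matmul n (fst g) (fst h), fun i => mvmul n (fst g) (snd h) i + snd g i).

Definition invE (n : nat) (g : Elt) : Elt :=
  (transpose (fst g), fun i => - mvmul n (transpose (fst g)) (snd g) i).

Definition subgroupE (n : nat) (Gam : Elt -> Prop) : Prop :=
  (forall g, Gam g -> isE n g) /\
  Gam (idE n) /\
  (forall g h, Gam g -> Gam h -> Gam (compE n g h)) /\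
  (forall g, Gam g -> Gam (invE n g)).

Definition discreteE (n : nat) (Gam : Elt -> Prop) : Prop :=
  forall g, Gam g -> exists eps, 0 < eps /\
    forall h, Gam h ->
      (forall i j, (i < n)%nat -> (j < n)%nat -> Rabs (fst g i j - fst h i j) < eps) ->
      (forall i, (i < n)%nat -> Rabs (snd g i - snd h i) < eps) ->
      h = g.

Definition simA (n : nat) (A' : nat -> nat -> R) (lam : R) (x : nat -> R) : nat -> R :=
  fun i => lam * mvmul n A' x i.

Definition simAinv (n : nat) (A' : nat -> nat -> R) (lam : R) (x : nat -> R) : nat -> R :=
  fun i => / lam * mvmul n (transpose A') x i.

Definition inConj (n : nat) (A' : nat -> nat -> R) (lam : R) (Gam : Elt -> Prop)
    (g : Elt) : Prop :=
  isE n g /\ exists gam, Gam gam /\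
    forall (x : nat -> R) (i : nat), (i < n)%nat ->
      apply n g x i = simA n A' lam (apply n gam (simAinv n A' lam x)) i.

(* Main.v *)
Require Import Defs.
From Stdlib Require Import Reals Lra Lia List FunctionalExtensionality Classical.
From mathcomp Require all_boot all_algebra Rstruct.
Open Scope R_scope.

Lemma rsum_ext n f g : (forall k, (k < n)%nat -> f k = g k) -> rsum n f = rsum n g.
Proof. induction n; simpl; intros H; auto. rewrite IHn by (intros; apply H; lia). rewrite H by lia. auto. Qed.

Module MC.
Import all_boot all_algebra Rstruct.
Import GRing.Theory.
Local Open Scope ring_scope.

Lemma rsum_big n f : rsum n f = (\sum_(i < n) f i)%R.
Proof.
elim: n => [|n IH] /=; first by rewrite big_ord0.
by rewrite big_ord_recr /= IH.
Qed.

Lemma rows (n : nat) (A : nat -> nat -> R) :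
  (forall i j, (i < n)%coq_nat -> (j < n)%coq_nat ->
      rsum n (fun k => A k i * A k j) = if Nat.eqb i j then 1%R else 0%R) ->
  forall i j, (i < n)%coq_nat -> (j < n)%coq_nat ->
      rsum n (fun k => A i k * A j k) = if Nat.eqb i j then 1%R else 0%R.
Proof.
move=> H i j Hi Hj.
pose M : 'M[R]_n := \matrix_(a < n, b < n) A a b.
have H1 : (M^T *m M = 1%:M)%R.
  apply/matrixP => a b; rewrite !mxE.
  rewrite (eq_bigr (fun k : 'I_n => A k a * A k b)); last by move=> k _; rewrite !mxE.
  rewrite -(rsum_big n (fun k => A k a * A k b)) H; try exact/ltP.
  case: (Nat.eqb_spec a b) => [e|ne].
    by rewrite (ord_inj e) eqxx.
  have nab : (a != b)%B by apply/eqP => E; apply: ne; rewrite E.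
  by rewrite (negbTE nab).
have H2 := mulmx1C H1.
move/matrixP: H2 => /(_ (Ordinal (introT ltP Hi)) (Ordinal (introT ltP Hj))).
rewrite /= !mxE.
rewrite (eq_bigr (fun k : 'I_n => A i k * A j k)); last by move=> k _; rewrite !mxE.
rewrite -(rsum_big n (fun k => A i k * A j k)) => ->.
case: (Nat.eqb_spec i j) => [e|ne].
  by rewrite (_ : (_ == _) = true) //; apply/eqP/ord_inj.
rewrite (_ : (_ == _) = false) //; apply/negbTE/eqP => E; apply: ne.
exact: (congr1 val E).
Qed.
End MC.

Lemma rows_orth n A : isO n A -> forall i j, (i < n)%nat -> (j < n)%nat ->
  rsum n (fun k => A i k * A j k) = if Nat.eqb i j then 1 else 0.
Proof. intros [H _]. exact (MC.rows n A H). Qed.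

Lemma rsum_plus n f g : rsum n (fun k => f k + g k) = rsum n f + rsum n g.
Proof. induction n; simpl; [lra|rewrite IHn; lra]. Qed.
Lemma rsum_minus n f g : rsum n (fun k => f k - g k) = rsum n f - rsum n g.
Proof. induction n; simpl; [lra|rewrite IHn; lra]. Qed.
Lemma rsum_scal n c f : rsum n (fun k => c * f k) = c * rsum n f.
Proof. induction n; simpl; [lra|rewrite IHn; lra]. Qed.
Lemma rsum_scal_r n c f : rsum n (fun k => f k * c) = rsum n f * c.
Proof. induction n; simpl; [lra|rewrite IHn; lra]. Qed.
Lemma rsum_zero n f : (forall k, (k < n)%nat -> f k = 0) -> rsum n f = 0.
Proof. intro H. induction n; simpl; auto. rewrite IHn by (intros; apply H; lia). rewrite H by lia. lra. Qed.
Lemma rsum_swap n m f : rsum n (fun a => rsum m (fun b => f a b)) = rsum m (fun b => rsum n (fun a => f a b)).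
Proof.
  induction n; simpl.
  - symmetry; apply rsum_zero; auto.
  - rewrite IHn. rewrite <- rsum_plus. reflexivity.
Qed.
Lemma rsum_delta_l n i f : (i < n)%nat -> rsum n (fun l => (if Nat.eqb i l then 1 else 0) * f l) = f i.
Proof.
  induction n; intro H; [lia|simpl].
  destruct (Nat.eq_dec i n).
  - subst. rewrite rsum_zero. rewrite Nat.eqb_refl; lra.
    intros k Hk. destruct (Nat.eqb_spec n k); [lia|lra].
  - rewrite IHn by lia. destruct (Nat.eqb_spec i n); [lia|lra].
Qed.
Lemma rsum_delta_r n j f : (j < n)%nat -> rsum n (fun l => f l * (if Nat.eqb l j then 1 else 0)) = f j.
Proof.
  intro H. rewrite <- (rsum_delta_l n j f H). apply rsum_ext. intros k _.
  rewrite Nat.eqb_sym. lra.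
Qed.
Lemma rsum_abs_le n f c : (forall k, (k < n)%nat -> Rabs (f k) <= c) -> Rabs (rsum n f) <= INR n * c.
Proof.
  intro H. induction n; cbn [rsum].
  - simpl; rewrite Rabs_R0; lra.
  - eapply Rle_trans; [apply Rabs_triang|].
    rewrite S_INR. assert (Rabs (f n) <= c) by (apply H; lia).
    assert (Rabs (rsum n f) <= INR n * c) by (apply IHn; intros; apply H; lia). lra.
Qed.
Lemma rsum_nonneg n f : (forall k, (k < n)%nat -> 0 <= f k) -> 0 <= rsum n f.
Proof. intro H. induction n; simpl; [lra|]. assert (0 <= f n) by (apply H; lia).
  assert (0 <= rsum n f) by (apply IHn; intros; apply H; lia). lra. Qed.
Lemma rsum_sq_ge n f i : (i < n)%nat -> f i * f i <= rsum n (fun k => f k * f k).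
Proof.
  induction n; intro H; [lia|simpl].
  destruct (Nat.eq_dec i n).
  - subst. assert (0 <= rsum n (fun k => f k * f k)) by (apply rsum_nonneg; intros; nra). lra.
  - assert (f i * f i <= rsum n (fun k => f k * f k)) by (apply IHn; lia). nra.
Qed.

Definition Id (n : nat) : nat -> nat -> R := fun i j => if Nat.eqb i j then 1 else 0.
Definition Beq (n : nat) (A B : nat -> nat -> R) := forall i j, (i < n)%nat -> (j < n)%nat -> A i j = B i j.

Lemma Beq_trans n A B C : Beq n A B -> Beq n B C -> Beq n A C.
Proof. unfold Beq; intros H1 H2 i j Hi Hj; rewrite H1, H2; auto. Qed.
Lemma Beq_sym n A B : Beq n A B -> Beq n B A.
Proof. unfold Beq; intros H1 i j Hi Hj; rewrite H1; auto. Qed.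
Lemma Beq_refl n A : Beq n A A.
Proof. unfold Beq; auto. Qed.

Lemma mm_assoc n A B C i j : matmul n (matmul n A B) C i j = matmul n A (matmul n B C) i j.
Proof.
  unfold matmul.
  transitivity (rsum n (fun k => rsum n (fun l => A i l * B l k * C k j))).
  - apply rsum_ext; intros k _. rewrite <- rsum_scal_r. reflexivity.
  - rewrite rsum_swap. apply rsum_ext; intros l _. rewrite <- rsum_scal.
    apply rsum_ext; intros; ring.
Qed.
Lemma mm_assocB n A B C : Beq n (matmul n (matmul n A B) C) (matmul n A (matmul n B C)).
Proof. intros i j _ _; apply mm_assoc. Qed.
Lemma mm_ext n A A' B B' : Beq n A A' -> Beq n B B' -> Beq n (matmul n A B) (matmul n A' B').
Proof. intros H1 H2 i j Hi Hj. unfold matmul. apply rsum_ext; intros k Hk. rewrite H1, H2; auto. Qed.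
Lemma mm_id_l n B : Beq n (matmul n (Id n) B) B.
Proof. intros i j Hi Hj. unfold matmul, Id. apply (rsum_delta_l n i (fun l => B l j)); auto. Qed.
Lemma mm_id_r n B : Beq n (matmul n B (Id n)) B.
Proof. intros i j Hi Hj. unfold matmul, Id. apply (rsum_delta_r n j (fun l => B i l)); auto. Qed.
Lemma mm_trans n A B i j : transpose (matmul n A B) i j = matmul n (transpose B) (transpose A) i j.
Proof. unfold transpose, matmul. apply rsum_ext; intros; ring. Qed.
Lemma isO_cols n B : isO n B -> Beq n (matmul n (transpose B) B) (Id n).
Proof. intros [H _] i j Hi Hj. apply H; auto. Qed.
Lemma isO_rows n B : isO n B -> Beq n (matmul n B (transpose B)) (Id n).
Proof. intros H i j Hi Hj. apply rows_orth; auto. Qed.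

Lemma mv_assoc n A B v i : mvmul n (matmul n A B) v i = mvmul n A (mvmul n B v) i.
Proof.
  unfold mvmul, matmul.
  transitivity (rsum n (fun k => rsum n (fun l => A i l * B l k * v k))).
  - apply rsum_ext; intros k _. rewrite <- rsum_scal_r. reflexivity.
  - rewrite rsum_swap. apply rsum_ext; intros l _. rewrite <- rsum_scal.
    apply rsum_ext; intros; ring.
Qed.
Lemma mv_ext n A A' v w i : (i < n)%nat -> Beq n A A' -> (forall k, (k < n)%nat -> v k = w k) ->
  mvmul n A v i = mvmul n A' w i.
Proof. intros Hi H1 H2. unfold mvmul. apply rsum_ext; intros k Hk. rewrite H1, H2; auto. Qed.
Lemma mv_id n v i : (i < n)%nat -> mvmul n (Id n) v i = v i.
Proof. intros Hi. unfold mvmul, Id. apply (rsum_delta_l n i v); auto. Qed.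
Lemma mv_plus n A v w i : mvmul n A (fun k => v k + w k) i = mvmul n A v i + mvmul n A w i.
Proof. unfold mvmul. rewrite <- rsum_plus. apply rsum_ext; intros; ring. Qed.
Lemma mv_minus n A v w i : mvmul n A (fun k => v k - w k) i = mvmul n A v i - mvmul n A w i.
Proof. unfold mvmul. rewrite <- rsum_minus. apply rsum_ext; intros; ring. Qed.
Lemma mv_scal n A c v i : mvmul n A (fun k => c * v k) i = c * mvmul n A v i.
Proof. unfold mvmul. rewrite <- rsum_scal. apply rsum_ext; intros; ring. Qed.
Lemma dot_trans n A t w : rsum n (fun i => mvmul n A t i * w i) = rsum n (fun k => t k * mvmul n (transpose A) w k).
Proof.
  unfold mvmul, transpose.
  transitivity (rsum n (fun i => rsum n (fun k => A i k * t k * w i))).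
  - apply rsum_ext; intros. rewrite <- rsum_scal_r. reflexivity.
  - rewrite rsum_swap. apply rsum_ext; intros. rewrite <- rsum_scal. apply rsum_ext; intros; ring.
Qed.

Definition phi n A lam (y : Elt) : Elt :=
  (matmul n (matmul n A (fst y)) (transpose A), fun i => lam * mvmul n A (snd y) i).

Lemma phi_isE n A lam y : isO n A -> isE n y -> isE n (phi n A lam y).
Proof.
  intros HA [HY Ht]. pose proof (isO_cols n A HA) as HAc. pose proof (isO_rows n A HA) as HAr.
  pose proof (isO_cols n _ HY) as HYc.
  set (Y := fst y) in *. set (M := matmul n (matmul n A Y) (transpose A)).
  split; [split|].
  - intros i j Hi Hj. change (fst (phi n A lam y)) with M.
    change (matmul n (transpose M) M i j = Id n i j).
    assert (T1 : Beq n (transpose M) (matmul n A (matmul n (transpose Y) (transpose A)))).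
    { intros a b Ha Hb. unfold M. rewrite mm_trans. apply mm_ext; auto.
      - intros ? ? ? ?; reflexivity.
      - intros ? ? ? ?; apply mm_trans. }
    assert (T2 : Beq n (matmul n (transpose A) M) (matmul n Y (transpose A))).
    { unfold M. eapply Beq_trans; [apply Beq_sym, mm_assocB|].
      apply mm_ext; [|apply Beq_refl].
      eapply Beq_trans; [apply Beq_sym, mm_assocB|].
      eapply Beq_trans; [apply mm_ext; [apply HAc|apply Beq_refl]|]. apply mm_id_l. }
    assert (T3 : Beq n (matmul n (transpose Y) (matmul n (transpose A) M)) (transpose A)).
    { eapply Beq_trans; [apply mm_ext; [apply Beq_refl|apply T2]|].
      eapply Beq_trans; [apply Beq_sym, mm_assocB|].
      eapply Beq_trans; [apply mm_ext; [apply HYc|apply Beq_refl]|]. apply mm_id_l. }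
    revert i j Hi Hj. fold (Beq n (matmul n (transpose M) M) (Id n)).
    eapply Beq_trans; [apply mm_ext; [apply T1|apply Beq_refl]|].
    eapply Beq_trans; [apply mm_assocB|].
    eapply Beq_trans; [apply mm_ext; [apply Beq_refl|apply mm_assocB]|].
    eapply Beq_trans; [apply mm_ext; [apply Beq_refl|apply T3]|]. apply HAr.
  - destruct HA as [_ HA0]. intros i j [Hi|Hj]; simpl; unfold matmul.
    + apply rsum_zero; intros k Hk. rewrite rsum_zero; [ring|]. intros l Hl. rewrite HA0 by lia. ring.
    + apply rsum_zero; intros k Hk. unfold transpose. rewrite (HA0 j k) by lia. ring.
  - destruct HA as [_ HA0]. intros i Hi. simpl. unfold mvmul. rewrite rsum_zero; [ring|].
    intros k Hk. rewrite HA0 by lia. ring.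
Qed.

Lemma conj_apply n A lam y x i : 0 < lam -> 
  apply n (phi n A lam y) x i = simA n A lam (apply n y (simAinv n A lam x)) i.
Proof.
  intros Hl. unfold apply, simA, simAinv, phi. simpl.
  rewrite mv_plus.
  replace (mvmul n (fst y) (fun k0 => / lam * mvmul n (transpose A) x k0))
    with (fun k => / lam * mvmul n (fst y) (mvmul n (transpose A) x) k)
    by (apply functional_extensionality; intro k; rewrite mv_scal; reflexivity).
  rewrite mv_scal. rewrite !mv_assoc. field. lra.
Qed.

Lemma unconj n A Y : isO n A ->
  Beq n (matmul n (matmul n (transpose A) (matmul n (matmul n A Y) (transpose A))) A) Y.
Proof.
  intro HA. pose proof (isO_cols n A HA) as HAc.
  assert (T2 : Beq n (matmul n (transpose A) (matmul n (matmul n A Y) (transpose A))) (matmul n Y (transpose A))).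
  { eapply Beq_trans; [apply Beq_sym, mm_assocB|].
    apply mm_ext; [|apply Beq_refl].
    eapply Beq_trans; [apply Beq_sym, mm_assocB|].
    eapply Beq_trans; [apply mm_ext; [apply HAc|apply Beq_refl]|]. apply mm_id_l. }
  eapply Beq_trans; [apply mm_ext; [apply T2|apply Beq_refl]|].
  eapply Beq_trans; [apply mm_assocB|].
  eapply Beq_trans; [apply mm_ext; [apply Beq_refl|apply HAc]|]. apply mm_id_r.
Qed.

Lemma elt_eq (u v : Elt) : (forall i j, fst u i j = fst v i j) -> (forall i, snd u i = snd v i) -> u = v.
Proof.
  destruct u as [U a], v as [V b]; simpl; intros H1 H2.
  f_equal; apply functional_extensionality; intro i; [apply functional_extensionality; intro j|]; auto.
Qed.

Lemma phi_inj n A lam y z : isO n A -> 0 < lam -> isE n y -> isE n z ->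
  phi n A lam y = phi n A lam z -> y = z.
Proof.
  intros HA Hl [[_ Hy0] Hyt] [[_ Hz0] Hzt] E.
  assert (EM : forall i j, fst (phi n A lam y) i j = fst (phi n A lam z) i j) by (rewrite E; auto).
  assert (ET : forall i, snd (phi n A lam y) i = snd (phi n A lam z) i) by (rewrite E; auto).
  simpl in EM, ET.
  apply elt_eq.
  - intros i j. destruct (Nat.lt_ge_cases i n); destruct (Nat.lt_ge_cases j n).
    + rewrite <- (unconj n A (fst y) HA i j), <- (unconj n A (fst z) HA i j) by auto.
      unfold matmul at 1 3. apply rsum_ext; intros k Hk. f_equal.
      unfold matmul at 1 3. apply rsum_ext; intros l Hl'. f_equal. apply EM.
    + rewrite Hy0, Hz0 by auto; auto.
    + rewrite Hy0, Hz0 by auto; auto.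
    + rewrite Hy0, Hz0 by auto; auto.
  - intro i. destruct (Nat.lt_ge_cases i n).
    + pose proof (isO_cols n A HA) as HAc.
      assert (K : forall w, (forall j, (j < n)%nat -> mvmul n (transpose A) (fun k => lam * mvmul n A w k) j = lam * w j)).
      { intros w j Hj. rewrite mv_scal, <- mv_assoc. f_equal.
        rewrite (mv_ext n _ (Id n) w w) by auto. apply mv_id; auto. }
      apply (Rmult_eq_reg_l lam); [|lra].
      rewrite <- !K by auto. unfold mvmul at 1 3. apply rsum_ext; intros k Hk. f_equal. apply ET.
    + rewrite Hyt, Hzt by auto; auto.
Qed.

Definition Tn n (v : nat -> R) := rsum n (fun i => v i * v i).

Lemma Tn_phi n A lam y : isO n A -> Tn n (snd (phi n A lam y)) = lam * lam * Tn n (snd y).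
Proof.
  intros HA. unfold Tn; simpl.
  transitivity (lam * lam * rsum n (fun i => mvmul n A (snd y) i * mvmul n A (snd y) i)).
  { rewrite <- rsum_scal. apply rsum_ext; intros; ring. }
  f_equal. rewrite dot_trans. apply rsum_ext; intros k Hk. f_equal.
  rewrite <- mv_assoc. rewrite (mv_ext n _ (Id n) (snd y) (snd y)) by (auto; apply isO_cols; auto).
  apply mv_id; auto.
Qed.

Lemma isO_entry n B i j : isO n B -> (i < n)%nat -> (j < n)%nat -> Rabs (B i j) <= 1.
Proof.
  intros [H _] Hi Hj. pose proof (rsum_sq_ge n (fun k => B k j) i Hi) as Hs. simpl in Hs.
  rewrite H in Hs by auto. rewrite Nat.eqb_refl in Hs.
  unfold Rabs; destruct (Rcase_abs (B i j)); nra.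
Qed.

Lemma sq_bound x T : x * x <= T -> Rabs x <= 1 + T.
Proof. intro H. unfold Rabs; destruct (Rcase_abs x); nra. Qed.

Lemma close_eq n (Gam : Elt -> Prop) eps0 u v :
  subgroupE n Gam -> 0 < eps0 ->
  (forall h, Gam h ->
      (forall i j, (i < n)%nat -> (j < n)%nat -> Rabs (fst (idE n) i j - fst h i j) < eps0) ->
      (forall i, (i < n)%nat -> Rabs (snd (idE n) i - snd h i) < eps0) ->
      h = idE n) ->
  Gam u -> Gam v ->
  (forall i j, (i < n)%nat -> (j < n)%nat -> Rabs (fst u i j - fst v i j) < eps0 / (INR n + 1)) ->
  (forall i, (i < n)%nat -> Rabs (snd u i - snd v i) < eps0 / (INR n + 1)) ->
  u = v.
Proof.
  intros [HE [Hid [Hc Hi]]] He Hd Hu Hv Cm Ct.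
  set (d := eps0 / (INR n + 1)).
  assert (Hn : 0 <= INR n) by apply pos_INR.
  assert (Hdp : 0 < d) by (unfold d; apply Rdiv_lt_0_compat; lra).
  assert (Hnd : INR n * d < eps0).
  { unfold d. apply (Rmult_lt_reg_r (INR n + 1)); [lra|]. field_simplify; [|lra]. nra. }
  pose proof (HE u Hu) as [HUo HUt]. pose proof (HE v Hv) as [HVo HVt].
  pose proof (HE _ (Hi u Hu)) as [HUr _].
  set (U := fst u) in *. set (V := fst v) in *.
  assert (Hh : compE n (invE n u) v = idE n).
  { apply Hd; [apply Hc; auto|..].
    - intros i j Hi' Hj'. simpl. replace (Nat.ltb i n) with true by (symmetry; apply Nat.ltb_lt; auto).
      simpl. pose proof HUo as [HU1 _]. rewrite <- (HU1 i j) by auto.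
      unfold matmul, transpose. rewrite <- rsum_minus.

      eapply Rle_lt_trans; [|apply Hnd]. apply rsum_abs_le. intros k Hk.
      change (Rabs (U k i * U k j - U k i * V k j) <= d).
      replace (U k i * U k j - U k i * V k j) with (U k i * (U k j - V k j)) by ring.
      rewrite Rabs_mult. pose proof (isO_entry n U k i HUo Hk Hi').
      pose proof (Cm k j Hk Hj'). pose proof (Rabs_pos (U k i)). pose proof (Rabs_pos (U k j - V k j)).
      unfold d in *. nra.
    - intros i Hi'. simpl.
      assert (E: 0 - (mvmul n (transpose U) (snd v) i + - mvmul n (transpose U) (snd u) i) = mvmul n (transpose U) (fun k => snd u k - snd v k) i) by (rewrite mv_minus; ring).
      change (Rabs (0 - (mvmul n (transpose U) (snd v) i + - mvmul n (transpose U) (snd u) i)) < eps0). rewrite E.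
      eapply Rle_lt_trans; [|apply Hnd]. apply rsum_abs_le. intros k Hk.
      rewrite Rabs_mult. pose proof (isO_entry n U k i HUo Hk Hi').
      pose proof (Ct k Hk). pose proof (Rabs_pos (transpose U i k)). pose proof (Rabs_pos (snd u k - snd v k)).
      unfold transpose in *. unfold d in *. nra. }
  assert (HM : Beq n (matmul n (transpose U) V) (Id n)).
  { intros i j Hi' Hj'. assert (E := f_equal (fun h => fst h i j) Hh). simpl in E.
    unfold U, V. rewrite E. replace (Nat.ltb i n) with true by (symmetry; apply Nat.ltb_lt; auto). reflexivity. }
  assert (HT : forall i, (i < n)%nat -> mvmul n (transpose U) (fun k => snd v k - snd u k) i = 0).
  { intros i Hi'. assert (E := f_equal (fun h => snd h i) Hh). simpl in E. rewrite mv_minus.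
    unfold U. lra. }
  assert (HR : Beq n (matmul n U (transpose U)) (Id n)).
  { intros i j Hi' Hj'. destruct HUr as [HUr _]. apply HUr; auto. }
  apply elt_eq.
  - intros i j. destruct (Nat.lt_ge_cases i n); destruct (Nat.lt_ge_cases j n).
    + symmetry. change (V i j = U i j). revert i j H H0.
      fold (Beq n V U).
      eapply Beq_trans; [apply Beq_sym, mm_id_l|].
      eapply Beq_trans; [apply mm_ext; [apply Beq_sym, HR|apply Beq_refl]|].
      eapply Beq_trans; [apply mm_assocB|].
      eapply Beq_trans; [apply mm_ext; [apply Beq_refl|apply HM]|]. apply mm_id_r.
    + destruct HUo as [_ H1], HVo as [_ H2]. unfold U, V in *. rewrite H1, H2 by auto; auto.
    + destruct HUo as [_ H1], HVo as [_ H2]. unfold U, V in *. rewrite H1, H2 by auto; auto.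
    + destruct HUo as [_ H1], HVo as [_ H2]. unfold U, V in *. rewrite H1, H2 by auto; auto.
  - intro j. destruct (Nat.lt_ge_cases j n).
    + apply Rminus_diag_uniq_sym. rewrite <- (mv_id n (fun k => snd v k - snd u k) j) by auto.
      rewrite (mv_ext n _ (matmul n U (transpose U)) (fun k => snd v k - snd u k) (fun k => snd v k - snd u k))
        by (auto; apply Beq_sym; auto).
      rewrite mv_assoc. unfold mvmul at 1. apply rsum_zero. intros k Hk.
      fold (mvmul n (transpose U) (fun k => snd v k - snd u k) k). rewrite HT by auto. ring.
    + rewrite HUt, HVt by auto; auto.
Qed.

Definition inf (P : nat -> Prop) := forall N, exists k, (N <= k)%nat /\ P k.

Lemma half (f : nat -> R) P lo w : inf P -> (forall k, P k -> lo <= f k <= lo + w) ->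
  exists lo' P', inf P' /\ (forall k, P' k -> P k) /\ (forall k, P' k -> lo' <= f k <= lo' + w / 2).
Proof.
  intros HP Hb.
  destruct (classic (inf (fun k => P k /\ f k <= lo + w / 2))) as [H|H].
  - exists lo, (fun k => P k /\ f k <= lo + w / 2). split; [auto|split].
    + intros k [Hk _]; auto.
    + intros k [Hk Hf]. pose proof (Hb k Hk). lra.
  - unfold inf in H. apply not_all_ex_not in H. destruct H as [N HN].
    exists (lo + w / 2), (fun k => P k /\ (N <= k)%nat). split; [|split].
    + intros M. destruct (HP (Nat.max N M)) as [k [Hk1 Hk2]]. exists k. split; [lia|split; auto; lia].
    + intros k [Hk _]; auto.
    + intros k [Hk HNk]. pose proof (Hb k Hk).
      assert (~ (f k <= lo + w / 2)) by (intro Hf; apply HN; exists k; auto). lra.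
Qed.

Lemma bisect (f : nat -> R) m : forall P lo w, inf P -> (forall k, P k -> lo <= f k <= lo + w) ->
  exists lo' P', inf P' /\ (forall k, P' k -> P k) /\ (forall k, P' k -> lo' <= f k <= lo' + w / 2 ^ m).
Proof.
  induction m; intros P lo w HP Hb.
  - exists lo, P. split; [auto|split; auto]. intros k Hk. simpl. replace (w / 1) with w by field. auto.
  - destruct (half f P lo w HP Hb) as [lo1 [P1 [H1 [H2 H3]]]].
    destruct (IHm P1 lo1 (w / 2) H1 H3) as [lo' [P' [H4 [H5 H6]]]].
    exists lo', P'. split; [auto|split; auto].
    intros k Hk. replace (w / 2 ^ S m) with (w / 2 / 2 ^ m). auto.
    simpl. field. apply pow_nonzero. lra.
Qed.

Lemma INR_le_pow2 m : INR m <= 2 ^ m.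
Proof.
  induction m; [simpl; lra|]. rewrite S_INR. change (2 ^ S m) with (2 * 2 ^ m). assert (1 <= 2 ^ m) by (apply pow_R1_Rle; lra). lra.
Qed.

Lemma small_pow a d : 0 < a -> 0 < d -> exists m, a / 2 ^ m < d.
Proof.
  intros Ha Hd. destruct (archimed_cor1 (d / a)) as [N [HN HN0]]. apply Rdiv_lt_0_compat; auto.
  exists N. pose proof (INR_le_pow2 N). assert (0 < INR N) by (apply lt_0_INR; auto).
  assert (Hp : 0 < 2 ^ N) by (apply pow_lt; lra).
  apply (Rmult_lt_reg_r (2 ^ N)); auto. unfold Rdiv. rewrite Rmult_assoc, Rinv_l by lra.
  assert (a * / INR N < d).
  { apply (Rmult_lt_reg_r (/ a)). apply Rinv_0_lt_compat; auto.
    replace (a * / INR N * / a) with (/ INR N) by (field; lra). auto. }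
  assert (a < d * INR N).
  { apply (Rmult_lt_reg_r (/ INR N)). apply Rinv_0_lt_compat; auto.
    replace (d * INR N * / INR N) with d by (field; lra). lra. }
  nra.
Qed.

Lemma cluster1 (f : nat -> R) P M d : 0 < d -> 0 < M -> inf P -> (forall k, P k -> Rabs (f k) <= M) ->
  exists P', inf P' /\ (forall k, P' k -> P k) /\ (forall k l, P' k -> P' l -> Rabs (f k - f l) < d).
Proof.
  intros Hd HM HP Hb.
  destruct (small_pow (2 * M) d) as [m Hm]; [lra|auto|].
  destruct (bisect f m P (- M) (2 * M) HP) as [lo [P' [H1 [H2 H3]]]].
  { intros k Hk. pose proof (Hb k Hk). unfold Rabs in *; destruct (Rcase_abs (f k)); lra. }
  exists P'. split; [auto|split; auto]. intros k l Hk Hl.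
  pose proof (H3 k Hk). pose proof (H3 l Hl). unfold Rabs; destruct (Rcase_abs (f k - f l)); lra.
Qed.

Lemma clusterL (L : list (nat -> R)) M d : 0 < d -> 0 < M -> forall P, inf P ->
  (forall f, In f L -> forall k, P k -> Rabs (f k) <= M) ->
  exists P', inf P' /\ (forall k, P' k -> P k) /\
    (forall f, In f L -> forall k l, P' k -> P' l -> Rabs (f k - f l) < d).
Proof.
  intros Hd HM. induction L as [|f L IH]; intros P HP Hb.
  - exists P. split; [auto|split; auto]. intros f [].
  - destruct (cluster1 f P M d Hd HM HP) as [P1 [H1 [H2 H3]]].
    { intros; apply Hb; simpl; auto. }
    destruct (IH P1 H1) as [P2 [H4 [H5 H6]]].
    { intros g Hg k Hk. apply Hb; simpl; auto. }
    exists P2. split; [auto|split; auto]. intros g [Hg|Hg] k l Hk Hl.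
    + subst g. apply H3; auto.
    + apply H6; auto.
Qed.

Definition iterE n A lam (g : Elt) (k : nat) : Elt := Nat.iter k (phi n A lam) g.

Theorem mainTheorem12 (n : nat) (Gam : Elt -> Prop) (A' : nat -> nat -> R) (lam : R) :
  subgroupE n Gam ->
  discreteE n Gam ->
  isO n A' ->
  0 < lam ->
  (forall g, inConj n A' lam Gam g -> Gam g) ->
  lam <= 1 ->
  forall g, inConj n A' lam Gam g <-> Gam g.
Proof.
  intros Hsub Hdisc HA Hlam Hhyp Hle g. split; [apply Hhyp|intro Hg].
  pose proof Hsub as [HE [Hid [Hc Hi]]].
  set (x := iterE n A' lam g).
  assert (HxS : forall k, x (S k) = phi n A' lam (x k)) by (intros; reflexivity).
  assert (Hphi : forall y, Gam y -> Gam (phi n A' lam y)).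
  { intros y Hy. apply Hhyp. split; [apply phi_isE; auto|].
    exists y. split; auto. intros; apply conj_apply; auto. }
  assert (Hx : forall k, Gam (x k)).
  { induction k; [exact Hg|rewrite HxS; auto]. }
  assert (HT : forall k, Tn n (snd (x k)) <= Tn n (snd g)).
  { induction k; [simpl; lra|]. rewrite HxS, Tn_phi by auto.
    assert (0 <= Tn n (snd (x k))) by (apply rsum_nonneg; intros; nra).
    assert (lam * lam <= 1) by nra. nra. }
  set (Mb := 1 + Tn n (snd g)).
  assert (HMb : 0 < Mb) by (unfold Mb; assert (0 <= Tn n (snd g)) by (apply rsum_nonneg; intros; nra); lra).
  destruct (Hdisc (idE n) Hid) as [eps0 [Heps Hiso]].
  set (d := eps0 / (INR n + 1)).
  assert (Hd : 0 < d) by (unfold d; apply Rdiv_lt_0_compat; [lra|pose proof (pos_INR n); lra]).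
  set (L := flat_map (fun i => map (fun j => fun k => fst (x k) i j) (seq 0 n)) (seq 0 n) ++
            map (fun i => fun k => snd (x k) i) (seq 0 n)).
  destruct (clusterL L Mb d Hd HMb (fun _ => True)) as [P [HP1 [_ HP3]]].
  { intro N. exists N. split; auto. }
  { intros f Hf k _. unfold L in Hf. apply in_app_or in Hf. destruct Hf as [Hf|Hf].
    - apply in_flat_map in Hf. destruct Hf as [i [Hi1 Hf]]. apply in_map_iff in Hf.
      destruct Hf as [j [Hfj Hj1]]. subst f. apply in_seq in Hi1, Hj1.
      pose proof (HE _ (Hx k)) as [HO _]. pose proof (isO_entry n _ i j HO ltac:(lia) ltac:(lia)).
      unfold Mb. assert (0 <= Tn n (snd g)) by (apply rsum_nonneg; intros; nra). lra.
    - apply in_map_iff in Hf. destruct Hf as [i [Hfi Hi1]]. subst f. apply in_seq in Hi1.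
      apply sq_bound. eapply Rle_trans; [|apply (HT k)].
      apply (rsum_sq_ge n (snd (x k)) i). lia. }
  destruct (HP1 0%nat) as [a [_ Ha]]. destruct (HP1 (S a)) as [b [Hab Hb]].
  assert (Exy : x a = x b).
  { apply (close_eq n Gam eps0); auto.
    - intros i j Hi' Hj'. apply (HP3 (fun k => fst (x k) i j)); auto.
      unfold L. apply in_or_app. left. apply in_flat_map. exists i. split; [apply in_seq; lia|].
      apply in_map_iff. exists j. split; auto. apply in_seq; lia.
    - intros i Hi'. apply (HP3 (fun k => snd (x k) i)); auto.
      unfold L. apply in_or_app. right. apply in_map_iff. exists i. split; auto. apply in_seq; lia. }
  assert (Hcanc : forall a m, x a = x (a + m)%nat -> g = x m).
  { induction a0; intros m E; [exact E|].
    apply IHa0. change (x (S (a0 + m))) with (x (S a0 + m)%nat). rewrite !HxS in E.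
    apply (phi_inj n A' lam); auto. }
  replace b with (a + (b - a))%nat in Exy by lia.
  apply Hcanc in Exy. destruct (b - a)%nat as [|m] eqn:Ebm; [lia|].
  rewrite HxS in Exy.
  split; [apply HE; auto|]. exists (x m). split; auto.
  intros y i Hi'. transitivity (apply n (phi n A' lam (x m)) y i).
  - rewrite <- Exy. reflexivity.
  - apply conj_apply; auto.
Qed.
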